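(* Under the setting and recursive definitions of $\mu^*_l$ and $\sigma^{*2}_l$ below, for every $l=1,\dots,L$ and every $i=1,\dots,n_l$, $$\mu^*_l(\mathbf x^{[l]}_i)=y^{[l]}_i\quad\text{and}\quad\sigma^{*2}_l(\mathbf x^{[l]}_i)=0.$$
   Context: Fix $L\ge2$, $d\ge1$. For $l=1,\dots,L$ let $\mathcal X_l=\{\mathbf x^{[l]}_1,\dots,\mathbf x^{[l]}_{n_l}\}\subset\mathbb R^d$ be nested designs with distinct points, $\mathcal X_L\subseteq\cdots\subseteq\mathcal X_1$, with $\mathbf x^{[l]}_i=\mathbf x^{[l-1]}_i$ for $i\le n_l$, and let $\mathbf y_l=(y^{[l]}_1,\dots,y^{[l]}_{n_l})^T$ be observed outputs. Parameters: $\alpha_l\in\mathbb R$, $\tau_l^2>0$, $\theta_{lj}>0$, $\theta_{ly}>0$. Kernels: $K_1(\mathbf x,\mathbf x')=\prod_{j=1}^d\exp(-(x_j-x_j')^2/\theta_{1j})$; for $l\ge2$, $K_l((\mathbf x,y),(\mathbf x',y'))=\exp(-(y-y')^2/\theta_{ly})\prod_{j=1}^d\exp(-(x_j-x_j')^2/\theta_{lj})$. Matrices $\mathbf K_1=(K_1(\mathbf x^{[1]}_i,\mathbf x^{[1]}_k))$, $\mathbf K_l=(K_l((\mathbf x^{[l]}_i,y^{[l-1]}_i),(\mathbf x^{[l]}_k,y^{[l-1]}_k)))$ ($l\ge2$), assumed invertible; $r_i=(\mathbf K_l^{-1}(\mathbf y_l-\alpha_l\mathbf 1_{n_l}))_i$.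 Define $\mu_1^*(\mathbf x)=\alpha_1+\mathbf k_1(\mathbf x)^T\mathbf K_1^{-1}(\mathbf y_1-\alpha_1\mathbf 1_{n_1})$, $\sigma_1^{*2}(\mathbf x)=\tau_1^2(1-\mathbf k_1(\mathbf x)^T\mathbf K_1^{-1}\mathbf k_1(\mathbf x))$ with $(\mathbf k_1(\mathbf x))_i=K_1(\mathbf x,\mathbf x^{[1]}_i)$, and for $l\ge2$ recursively $\mu^*_l(\mathbf x)=\alpha_l+\sum_{i=1}^{n_l}r_i\prod_{j}\exp(-(x_j-x^{[l]}_{ij})^2/\theta_{lj})\,(1+2\sigma^{*2}_{l-1}(\mathbf x)/\theta_{ly})^{-1/2}\exp(-(y^{[l-1]}_i-\mu^*_{l-1}(\mathbf x))^2/(\theta_{ly}+2\sigma^{*2}_{l-1}(\mathbf x)))$, $\sigma^{*2}_l(\mathbf x)=\tau_l^2-(\mu^*_l(\mathbf x)-\alpha_l)^2+\sum_{i,k=1}^{n_l}\zeta_{ik}(r_ir_k-\tau_l^2(\mathbf K_l^{-1})_{ik})\prod_j\exp(-((x_j-x^{[l]}_{ij})^2+(x_j-x^{[l]}_{kj})^2)/\theta_{lj})$, with $\zeta_{ik}=(1+4\sigma^{*2}_{l-1}(\mathbf x)/\theta_{ly})^{-1/2}\exp\big(-(\tfrac{y^{[l-1]}_i+y^{[l-1]}_k}{2}-\mu^*_{l-1}(\mathbf x))^2/(\theta_{ly}/2+2\sigma^{*2}_{l-1}(\mathbf x))-(y^{[l-1]}_i-y^{[l-1]}_k)^2/(2\theta_{ly})\big)$.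 Here $x^{[l]}_{ij}$ is the $j$-th coordinate of $\mathbf x^{[l]}_i$. *)

(* Defs.v *)
From HB Require Import structures.
From mathcomp Require Import all_boot all_order all_algebra.
From mathcomp Require Import reals.
From mathcomp Require Import sequences exp.
Set Implicit Arguments. Unset Strict Implicit. Unset Printing Implicit Defensive.
Import Order.TTheory GRing.Theory Num.Theory.
Local Open Scope ring_scope.

(* Data of the recursive multi-fidelity GP.  Levels are l = 1..L (natural
   numbers, level 0 unused); points within a level are 0-based:
   xd l i = x^{[l]}_{i+1}, yd l i = y^{[l]}_{i+1}, for i < nd l. *)
Record mfdata (R : realType) (d : nat) := MFData {
  nd : nat -> nat;
  xd : nat -> nat -> 'rV[R]_d;
  yd : nat -> nat -> R;
  alpha : nat -> R;
  tau2 : nat -> R;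
  theta : nat -> 'I_d -> R;
  thetay : nat -> R
}.

Section Defs.
Variables (R : realType) (d : nat) (D : mfdata R d).

Definition sqexp (l : nat) (x x' : 'rV[R]_d) : R :=
  \prod_(j < d) expR (- (x ord0 j - x' ord0 j) ^+ 2 / theta D l j).

Definition Kmx (l : nat) : 'M[R]_(nd D l) :=
  \matrix_(i, k)
    (if l == 1%N then sqexp l (xd D l i) (xd D l k)
     else expR (- (yd D l.-1 i - yd D l.-1 k) ^+ 2 / thetay D l)
          * sqexp l (xd D l i) (xd D l k)).

Definition yvec (l : nat) : 'cV[R]_(nd D l) := \col_i yd D l i.

Definition rvec (l : nat) : 'cV[R]_(nd D l) :=
  invmx (Kmx l) *m (yvec l - const_mx (alpha D l)).

Definition k1vec (x : 'rV[R]_d) : 'cV[R]_(nd D 1) :=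
  \col_i sqexp 1 x (xd D 1 i).

Definition mu1 (x : 'rV[R]_d) : R :=
  alpha D 1 + ((k1vec x)^T *m rvec 1) ord0 ord0.

Definition sig1 (x : 'rV[R]_d) : R :=
  tau2 D 1 * (1 - ((k1vec x)^T *m invmx (Kmx 1) *m k1vec x) ord0 ord0).

(* level l >= 2, given mu*_{l-1} = mp and sigma*^2_{l-1} = sp *)
Definition mu_step (l : nat) (mp sp : 'rV[R]_d -> R) (x : 'rV[R]_d) : R :=
  alpha D l + \sum_(i < nd D l)
    rvec l i ord0 * sqexp l x (xd D l i)
    * (Num.sqrt (1 + 2 * sp x / thetay D l))^-1
    * expR (- (yd D l.-1 i - mp x) ^+ 2 / (thetay D l + 2 * sp x)).

Definition zeta (l : nat) (mp sp : 'rV[R]_d -> R) (x : 'rV[R]_d)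
    (i k : nat) : R :=
  (Num.sqrt (1 + 4 * sp x / thetay D l))^-1
  * expR (- ((yd D l.-1 i + yd D l.-1 k) / 2 - mp x) ^+ 2
             / (thetay D l / 2 + 2 * sp x)
          - (yd D l.-1 i - yd D l.-1 k) ^+ 2 / (2 * thetay D l)).

Definition sig_step (l : nat) (mp sp : 'rV[R]_d -> R) (x : 'rV[R]_d) : R :=
  tau2 D l - (mu_step l mp sp x - alpha D l) ^+ 2
  + \sum_(i < nd D l) \sum_(k < nd D l)
      zeta l mp sp x i k
      * (rvec l i ord0 * rvec l k ord0 - tau2 D l * invmx (Kmx l) i k)
      * \prod_(j < d) expR (- ((x ord0 j - xd D l i ord0 j) ^+ 2
                               + (x ord0 j - xd D l k ord0 j) ^+ 2)
                             / theta D l j).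

(* musig m = (mu*_{m+1}, sigma*^2_{m+1}) *)
Fixpoint musig (m : nat) : ('rV[R]_d -> R) * ('rV[R]_d -> R) :=
  match m with
  | 0 => (mu1, sig1)
  | m'.+1 => let p := musig m' in
             (mu_step m'.+2 p.1 p.2, sig_step m'.+2 p.1 p.2)
  end.

Definition mustar (l : nat) : 'rV[R]_d -> R := (musig l.-1).1.
Definition sigstar2 (l : nat) : 'rV[R]_d -> R := (musig l.-1).2.

End Defs.

(* Main.v *)
Require Import Defs.
From HB Require Import structures.
From mathcomp Require Import all_boot all_order all_algebra.
From mathcomp Require Import reals.
From mathcomp Require Import sequences exp.
From mathcomp Require Import ring lra.
Import Order.TTheory GRing.Theory Num.Theory.
Local Open Scope ring_scope.

Section H.
Variable R : realType.

Lemma L1 n (K : 'M[R]_n) (v : 'cV[R]_n) i : K \in unitmx ->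
  \sum_k K i k * (invmx K *m v) k ord0 = v i ord0.
Proof.
move=> HK; transitivity ((K *m (invmx K *m v)) i ord0); first by rewrite mxE.
by rewrite mulmxA mulmxV // mul1mx.
Qed.

Lemma L2 n (K : 'M[R]_n) i : K \in unitmx ->
  \sum_j \sum_k K i j * K i k * invmx K j k = K i i.
Proof.
move=> HK; rewrite exchange_big /=.
transitivity (\sum_k (K *m invmx K) i k * K i k).
  apply: eq_bigr => k _; rewrite mxE big_distrl /=; apply: eq_bigr => j _.
  by rewrite mulrAC.
rewrite mulmxV //.
transitivity ((1%:M *m K^T) i i); first by rewrite mxE; apply: eq_bigr => k _; rewrite [K^T _ _]mxE.
by rewrite mul1mx mxE.
Qed.

Lemma zeta_id (a b c t : R) : t != 0 ->
  (Num.sqrt (1 + 4 * 0 / t))^-1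
  * expR (- ((a + b) / 2 - c) ^+ 2 / (t / 2 + 2 * 0) - (a - b) ^+ 2 / (2 * t))
  = expR (- (c - a) ^+ 2 / t) * expR (- (c - b) ^+ 2 / t).
Proof.
move=> Ht; rewrite !mulr0 mul0r addr0 sqrtr1 invr1 mul1r -expRD; congr expR.
by field.
Qed.

Lemma sqexp_refl d (D : mfdata R d) l x : sqexp D l x x = 1.
Proof. by rewrite /sqexp big1 // => j _; rewrite subrr expr2 mul0r oppr0 mul0r expR0. Qed.

Lemma sqexp2 d (D : mfdata R d) l (x y z : 'rV[R]_d) :
  \prod_(j < d) expR (- ((x ord0 j - y ord0 j) ^+ 2 + (x ord0 j - z ord0 j) ^+ 2) / theta D l j)
  = sqexp D l x y * sqexp D l x z.
Proof.
rewrite /sqexp -big_split /=; apply: eq_bigr => j _; rewrite -expRD; congr expR.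
by rewrite opprD mulrDl.
Qed.

End H.

Theorem proposition3p2 (R : realType) (d L : nat) (D : mfdata R d) :
  (2 <= L)%N -> (1 <= d)%N ->
  (forall l, (2 <= l <= L)%N -> (nd D l <= nd D l.-1)%N) ->
  (forall l i, (2 <= l <= L)%N -> (i < nd D l)%N -> xd D l i = xd D l.-1 i) ->
  (forall l i k, (1 <= l <= L)%N -> (i < nd D l)%N -> (k < nd D l)%N ->
     xd D l i = xd D l k -> i = k) ->
  (forall l, (1 <= l <= L)%N -> 0 < tau2 D l) ->
  (forall l j, (1 <= l <= L)%N -> 0 < theta D l j) ->
  (forall l, (2 <= l <= L)%N -> 0 < thetay D l) ->
  (forall l, (1 <= l <= L)%N -> Kmx D l \in unitmx) ->
  forall l, (1 <= l <= L)%N -> forall i, (i < nd D l)%N ->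
    mustar D l (xd D l i) = yd D l i /\ sigstar2 D l (xd D l i) = 0.
Proof.
move=> HL Hd Hnd Hxd _ Htau Hth Hthy HK.
suff H : forall m, (m.+1 <= L)%N -> forall i, (i < nd D m.+1)%N ->
  (musig D m).1 (xd D m.+1 i) = yd D m.+1 i /\ (musig D m).2 (xd D m.+1 i) = 0.
  by move=> [|l] // /andP[_ Hl] i Hi; exact: H.

elim=> [|m IH] HmL i Hi.
- have HK1 := HK 1%N HmL.
  set io := Ordinal Hi.
  have E1 : forall k : 'I_(nd D 1), sqexp D 1 (xd D 1 i) (xd D 1 k) = Kmx D 1 io k by move=> k; rewrite mxE.
  split.
    rewrite /= /mu1 mxE.
    under eq_bigr => k _ do rewrite [(_^T) _ _]mxE [k1vec _ _ _ _]mxE E1.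
    rewrite L1 // !mxE. by rewrite addrCA subrr addr0.
  rewrite /= /sig1 mxE.
  under eq_bigr => k _ do rewrite [(_ *m _) _ _]mxE big_distrl /=.
  rewrite exchange_big /=.
  under eq_bigr => j _ do under eq_bigr => k _ do rewrite [(_^T) _ _]mxE [k1vec _ _ _ _]mxE [k1vec _ _ _ _]mxE E1 E1 mulrAC.
  by rewrite L2 // mxE /= sqexp_refl subrr mulr0.
- have HmL' : (m.+1 <= L)%N by apply: ltnW.
  have H2 : (2 <= m.+2 <= L)%N by rewrite HmL.
  have Hi' : (i < nd D m.+1)%N := leq_trans Hi (Hnd _ H2).
  have [IH1 IH2] := IH HmL' i Hi'.
  have Ex : xd D m.+2 i = xd D m.+1 i := Hxd _ _ H2 Hi.
  have HKl : Kmx D m.+2 \in unitmx by apply: HK; rewrite HmL.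
  have Ht : thetay D m.+2 != 0 by rewrite gt_eqF // Hthy.
  set io := Ordinal Hi.
  have Emu : mu_step D m.+2 (musig D m).1 (musig D m).2 (xd D m.+2 i) = yd D m.+2 i.
    rewrite /mu_step Ex IH1 IH2.
    under eq_bigr => k _ do rewrite !mulr0 mul0r addr0 sqrtr1 invr1 mulr1
       -(sqrrN (_ - _)) opprB -Ex.
    transitivity (alpha D m.+2 + \sum_k Kmx D m.+2 io k * rvec D m.+2 k ord0).
      rewrite addr0; apply: f_equal; apply: eq_bigr => k _; rewrite [Kmx _ _ _ _]mxE /=.
      ring.
    by rewrite L1 // !mxE addrCA subrr addr0.
  split; first exact: Emu.
  rewrite /= /sig_step Emu.
  under eq_bigr => j _ do under eq_bigr => k _ do
     rewrite /zeta sqexp2 Ex IH1 IH2 zeta_id // -Ex.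
  transitivity (tau2 D m.+2 - (yd D m.+2 i - alpha D m.+2) ^+ 2 +
    ((\sum_j Kmx D m.+2 io j * rvec D m.+2 j ord0) ^+ 2
     - tau2 D m.+2 * \sum_j \sum_k Kmx D m.+2 io j * Kmx D m.+2 io k * invmx (Kmx D m.+2) j k)).
    congr (_ + _).
    rewrite expr2 big_distrl /= mulr_sumr -sumrB; apply: eq_bigr => j _.
    rewrite big_distrr /= mulr_sumr -sumrB; apply: eq_bigr => k _.
    rewrite !mxE /=; ring.
  rewrite L1 // L2 // [Kmx _ _ _ _]mxE /= sqexp_refl subrr.
  have -> : (0:R) ^+ 2 = 0 by rewrite expr2 mulr0.
  rewrite oppr0 mul0r expR0 mulr1 !mxE /=; ring.
Qed.
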